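(* Let $\mathcal{F}:\mathcal{T}^Y\to\mathcal{T}^Z$ be a cover between trees of spheres, let $v$ be a vertex of $T^Z$ and $e\in E_v$ an edge of $T^Z$ containing $v$. Then $D_e=D_v$, where $D_v:=\sum_{v'\in F^{-1}(v)}\deg(v')$ and $D_e:=\sum_{e'\in F^{-1}(e)}\deg(e')$.
   Context: Trees are finite connected graphs without cycles (vertex set $V$, edges $2$-element subsets of $V$, $E_v$ the set of edges containing $v$); leaves are vertices of valence $1$, the others are internal vertices ($IV$). A tree marked by a finite set $X$ ($\ge3$ elements) is a tree whose set of leaves is $X$. A tree of spheres $\mathcal{T}^X$ consists of a tree $T^X$ marked by $X$ and, for each internal vertex $v$, a topological $2$-sphere $\mathcal{S}_v$ and an injection $i_v:E_v\to\mathcal{S}_v$; $X_v:=i_v(E_v)$. A cover $\mathcal{F}:\mathcal{T}^Y\to\mathcal{T}^Z$ consists of a map $F:T^Y\to T^Z$ sending vertices to vertices and each edge $\{v,w\}$ to the edge $\{F(v),F(w)\}$, with $F(Y)\subseteq Z$ and $F(IV^Y)\subseteq IV^Z$, and for each $v\in IV^Y$, $w=F(v)$, a topological branched covering $f_v:\mathcal{S}_v\to\mathcal{S}_w$ such that (a) $f_v:\mathcal{S}_v\setminus Y_v\to\mathcal{S}_w\setminus Z_w$ is a covering map, (b) $f_v\circ i_v=i_w\circ F$ on $E_v$, (c) for an edge $e=\{v_1,v_2\}$ between internal vertices, $\deg_{i_{v_1}(e)}f_{v_1}=\deg_{i_{v_2}(e)}f_{v_2}$. Degrees: $\deg(v)=\deg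 f_v$ for internal $v$; for an edge $e$ with an internal endpoint $v$, $\deg(e)=\deg_{i_v(e)}f_v$ (well defined by (c)); for a leaf $y$ with its edge $e$, $\deg(y)=\deg(e)$. *)

(* Defs.v *)
From HB Require Import structures.
From mathcomp Require Import all_boot all_order all_algebra.
From mathcomp Require Import all_classical all_reals all_analysis.
From mathcomp Require Import Rstruct Rstruct_topology.
Set Implicit Arguments. Unset Strict Implicit. Unset Printing Implicit Defensive.
Import Order.TTheory GRing.Theory Num.Theory.
Local Open Scope classical_set_scope.
Local Open Scope ring_scope.

Notation RR := Rdefinitions.R.

Definition homeo {X Y : topologicalType} (A : set X) (B : set Y) (phi : X -> Y) : Prop :=
  [/\ {within A, continuous phi}, (forall x, A x -> B (phi x)) &
   exists psi : Y -> X,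
     [/\ {within B, continuous psi}, (forall y, B y -> A (psi y)),
         (forall x, A x -> psi (phi x) = x) & (forall y, B y -> phi (psi y) = y)]].

Definition sphere2 : set ((RR * RR) * RR) :=
  [set p | p.1.1 ^+ 2 + p.1.2 ^+ 2 + p.2 ^+ 2 = 1].

Definition is_sphere (S : topologicalType) : Prop :=
  exists phi : S -> (RR * RR) * RR, homeo setT sphere2 phi.

(* the complex plane as R^2, with complex multiplication and powers *)
Definition cmul (z w : RR * RR) : RR * RR :=
  (z.1 * w.1 - z.2 * w.2, z.1 * w.2 + z.2 * w.1).
Definition cpow (z : RR * RR) (d : nat) : RR * RR := iter d (cmul z) (1, 0).
Definition disk : set (RR * RR) := [set z | z.1 ^+ 2 + z.2 ^+ 2 < 1].

Definition local_deg {S T : topologicalType} (f : S -> T) (x : S) (d : nat) : Prop :=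
  (0 < d)%N /\
  exists (U : set S) (V : set T) (phi : S -> RR * RR) (psi : T -> RR * RR),
    [/\ [/\ open U, U x, open V & f @` U `<=` V],
        homeo U disk phi /\ homeo V disk psi,
        phi x = (0, 0), psi (f x) = (0, 0) &
        forall u, U u -> psi (f u) = cpow (phi u) d].

Definition ldeg {S T : topologicalType} (f : S -> T) (x : S) : nat :=
  xget 0%N [set d | local_deg f x d].

Definition branched_cover {S T : topologicalType} (f : S -> T) : Prop :=
  continuous f /\ forall x, exists d, local_deg f x d.

Definition fiber_card {S T : topologicalType} (f : S -> T) (y : T) (d : nat) : Prop :=
  exists s : seq S, [/\ uniq s, (forall x, f x = y <-> x \in s) & size s = d].

Definition bdeg {S T : topologicalType} (f : S -> T) : nat :=
  xget 0%N [set d | exists B : set T, finite_set B /\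
                       forall y, ~ B y -> fiber_card f y d].

Definition covering_on {X Y : topologicalType} (p : X -> Y) (A : set X) (B : set Y) : Prop :=
  (forall x, A x -> B (p x)) /\
  forall y, B y -> exists V : set Y,
    [/\ open V, V y, V `<=` B &
     exists (I : Type) (U : I -> set X),
       [/\ (forall i, open (U i)),
           (forall i j, i <> j -> U i `&` U j = set0),
           A `&` p @^-1` V = \bigcup_(i in setT) U i &
           (forall i, homeo (U i) V p)]].

Local Close Scope classical_set_scope.

Definition Ev {V : finType} (E : {set {set V}}) (v : V) : {set {set V}} :=
  [set a in E | v \in a].

Definition adj {V : finType} (E : {set {set V}}) : rel V :=
  fun x y => [set x; y] \in E.

Definition is_tree {V : finType} (E : {set {set V}}) : Prop :=
  [/\ (forall a, a \in E -> #|a| = 2%N),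
      (forall x y : V, connect (adj E) x y) &
      ~ (exists s : seq V, [/\ (3 <= size s)%N, uniq s & cycle (adj E) s])].

Definition leaves {V : finType} (E : {set {set V}}) : {set V} :=
  [set v | #|Ev E v| == 1%N].

Record tree_of_spheres := TreeOfSpheres {
  tV : finType;
  tE : {set {set tV}};
  tX : {set tV};
  tS : tV -> topologicalType;              (* S_v, for internal v *)
  ti : forall v : tV, {set tV} -> tS v;    (* i_v, meaningful on E_v *)
  tree_ax : is_tree tE;
  mark_ax : leaves tE = tX;
  card_ax : (3 <= #|tX|)%N;
  sphere_ax : forall v, v \notin tX -> is_sphere (tS v);
  inj_ax : forall v, v \notin tX -> {in Ev tE v &, injective (ti v)}
}.

Definition Xv (T : tree_of_spheres) (v : tV T) : set (tS v) :=
  fun z => exists2 a, a \in Ev (tE T) v & @ti _ v a = z.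

Record tcover (TY TZ : tree_of_spheres) := Cover {
  cF : tV TY -> tV TZ;
  cf : forall v : tV TY, tS v -> tS (cF v);
  edge_ax : forall a, a \in tE TY -> cF @: a \in tE TZ;
  leaf_ax : forall y, y \in tX TY -> cF y \in tX TZ;
  int_ax : forall v, v \notin tX TY -> cF v \notin tX TZ;
  bc_ax : forall v, v \notin tX TY -> branched_cover (@cf v);
  cov_ax : forall v, v \notin tX TY ->
     covering_on (@cf v) (~` @Xv _ v)%classic (~` @Xv _ (cF v))%classic;
  compat_ax : forall v, v \notin tX TY -> forall a, a \in Ev (tE TY) v ->
     @cf v (@ti _ v a) = @ti _ (cF v) (cF @: a);
  deg_ax : forall v1 v2, v1 \notin tX TY -> v2 \notin tX TY ->
     [set v1; v2] \in tE TY ->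
     ldeg (@cf v1) (@ti _ v1 [set v1; v2]) =
     ldeg (@cf v2) (@ti _ v2 [set v1; v2])
}.

Section Degrees.
Variables (TY TZ : tree_of_spheres) (C : tcover TY TZ).

Definition edge_deg (a : {set tV TY}) : nat :=
  match [pick v in a | v \notin tX TY] with
  | Some v => ldeg (@cf _ _ C v) (@ti _ v a)
  | None => 0%N
  end.

Definition vertex_deg (v : tV TY) : nat :=
  if v \notin tX TY then bdeg (@cf _ _ C v)
  else match [pick a in Ev (tE TY) v] with
       | Some a => edge_deg a
       | None => 0%N
       end.

Definition Dv (w : tV TZ) : nat := \sum_(v' | cF C v' == w) vertex_deg v'.
Definition De (e : {set tV TZ}) : nat :=
  \sum_(e' in tE TY | cF C @: e' == e) edge_deg e'.

End Degrees.

(* Main.v *)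
Require Import Defs.
From HB Require Import structures.
From mathcomp Require Import all_boot all_order all_algebra all_field.
From mathcomp Require Import finmap.
From mathcomp Require Import all_classical all_reals all_analysis.
From mathcomp Require Import Rstruct Rstruct_topology.
From mathcomp Require Import complex.
From mathcomp Require Import ring lra.
Set Implicit Arguments. Unset Strict Implicit. Unset Printing Implicit Defensive.
Import Order.TTheory GRing.Theory Num.Theory.
Local Open Scope classical_set_scope.
Local Open Scope ring_scope.
Definition nrm2 (z : RR * RR) : RR := z.1 ^+ 2 + z.2 ^+ 2.
Lemma nrm2_ge0 z : 0 <= nrm2 z.
Proof. by rewrite /nrm2 addr_ge0 // sqr_ge0. Qed.
Lemma nrm2_mul z w : nrm2 (cmul z w) = nrm2 z * nrm2 w.
Proof. rewrite /nrm2 /cmul /=. ring. Qed.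
Lemma cpowS z d : cpow z d.+1 = cmul z (cpow z d).
Proof. by []. Qed.
Lemma nrm2_pow z d : nrm2 (cpow z d) = nrm2 z ^+ d.
Proof. elim: d => [|d IH]; first by rewrite /nrm2 /= expr0 expr1n expr0n addr0.
by rewrite cpowS nrm2_mul IH exprS. Qed.
Lemma nrm2_eq0 z : nrm2 z = 0 -> z = (0, 0).
Proof. case: z => a b; rewrite /nrm2 /= => h.
have ha : a ^+ 2 = 0 by apply/eqP; rewrite eq_le sqr_ge0 andbT -h lerDl sqr_ge0.
have hb : b ^+ 2 = 0 by move: h; rewrite ha add0r.
by move/eqP: ha; rewrite sqrf_eq0 => /eqP ->; move/eqP: hb; rewrite sqrf_eq0 => /eqP ->.
Qed.
Lemma cpow_eq0 z d : (0 < d)%N -> cpow z d = (0, 0) -> z = (0, 0).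
Proof. move=> d0 h; apply: nrm2_eq0; have := nrm2_pow z d; rewrite h.
rewrite /nrm2 /= expr0n /= addr0 => /esym/eqP; rewrite expf_eq0 d0 /= => /eqP. exact. Qed.
Lemma nrm2_pow_lt z d r : (0 < d)%N -> 0 <= r -> nrm2 (cpow z d) < r ^+ d -> nrm2 z < r.
Proof. move=> d0 r0; rewrite nrm2_pow; apply: contra_ltT => h.
apply: lerXn2r; rewrite ?nnegrE ?nrm2_ge0 //; by rewrite leNgt. Qed.

Local Open Scope complex_scope.
Definition toC (z : RR * RR) : RR[i] := Complex z.1 z.2.
Definition ofC (x : RR[i]) : RR * RR := let: Complex a b := x in (a, b).
Lemma toCK : cancel toC ofC. Proof. by case. Qed.
Lemma ofCK : cancel ofC toC. Proof. by case. Qed.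
Lemma toC_mul z w : toC (cmul z w) = (toC z * toC w)%R.
Proof. by case: z => a b; case: w => c e. Qed.
Lemma toC_pow z d : toC (cpow z d) = (toC z ^+ d)%R.
Proof. elim: d => [|d IH]; first by [].
by rewrite cpowS toC_mul IH exprS. Qed.
Local Close Scope complex_scope.

Lemma roots_count (c : RR * RR) (d : nat) : (0 < d)%N -> c <> (0, 0) ->
  exists s : seq (RR * RR), [/\ uniq s, size s = d &
    forall z, cpow z d = c <-> z \in s].
Proof.
move=> d0 c0.
pose p : {poly RR[i]} := 'X^d - (toC c)%:P.
have [r hr] := closed_field_poly_normal p.
have mp : p \is monic by rewrite /p monicXnsubC.
move: hr; rewrite (monicP mp) scale1r => hr.
have hroot x : root p x = (x \in r) by rewrite hr root_prod_XsubC.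
have cC0 : toC c != 0.
  apply/negP => /eqP h; apply: c0; rewrite -[c]toCK h. by [].
have sep : separable_poly p.
  rewrite unlock. apply/Pdiv.ClosedField.coprimepP => x.
  rewrite /p => /rootP; rewrite hornerD hornerN hornerXn hornerC => /eqP; rewrite subr_eq0 => /eqP hx.
  rewrite derivB derivXn derivC subr0 hornerMn hornerXn -mulr_natr mulf_neq0 // ?pnatr_eq0 -?lt0n //.
  apply/negP => /eqP h. move: cC0; rewrite -hx.
  case: d d0 {hx p mp hr hroot} h => // d _ /= h; by rewrite exprS h mulr0 eqxx.
have ur : uniq r by rewrite -separable_prod_XsubC -hr.
exists (map ofC r); split.
- by rewrite map_inj_uniq //; apply: (can_inj ofCK).
- have : size p = (size r).+1 by rewrite hr size_prod_XsubC.
  by rewrite /p size_XnsubC // size_map => -[].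
- move=> z; rewrite -[X in X \in _]toCK (mem_map (can_inj ofCK)) -hroot /p /root hornerD hornerN hornerXn hornerC subr_eq0 -toC_pow.
  by split => [->|/eqP /(can_inj toCK) ->] //; rewrite eqxx.
Qed.
Lemma fst_cont (X Y : topologicalType) : continuous (@fst X Y).
Proof. by move=> [x y]; apply: cvg_fst. Qed.
Lemma snd_cont (X Y : topologicalType) : continuous (@snd X Y).
Proof. by move=> [x y]; apply: cvg_snd. Qed.
Lemma pair_cont (X Y Z : topologicalType) (f : X -> Y) (g : X -> Z) :
  continuous f -> continuous g -> continuous (fun x => (f x, g x)).
Proof. move=> cf cg x; apply: cvg_pair; [exact: cf | exact: cg]. Qed.
Lemma sqr_le1 (a : RR) : a ^+ 2 <= 1 -> -1 <= a <= 1.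
Proof. move=> h; apply/andP; split; nra. Qed.

Lemma contM (T : topologicalType) (f g : T -> RR) : continuous f -> continuous g -> continuous (fun x => f x * g x).
Proof. move=> cf cg x. exact: (@cvgM RR T (nbhs x) _ f g _ _ (cf x) (cg x)). Qed.
Lemma contD (T : topologicalType) (f g : T -> RR) : continuous f -> continuous g -> continuous (fun x => f x + g x).
Proof. move=> cf cg x. exact: (@cvgD RR RR^o T (nbhs x) _ f g _ _ (cf x) (cg x)). Qed.
Lemma contSq (T : topologicalType) (f : T -> RR) : continuous f -> continuous (fun x => f x ^+ 2).
Proof. by move=> cf; apply: contM. Qed.

Lemma hausdorff_prod (X Y : topologicalType) :
  hausdorff_space X -> hausdorff_space Y -> hausdorff_space (X * Y)%type.
Proof.
rewrite !open_hausdorff => hX hY [x1 y1] [x2 y2] ne.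
have [ex|nx] := eqVneq x1 x2.
  have ny : y1 != y2 by apply: contra ne => /eqP ->; rewrite ex.
  have [[A B] /= [yA yB] [oA oB /eqP AB0]] := hY _ _ ny.
  exists (snd @^-1` A, snd @^-1` B) => /=.
    by split; rewrite inE /preimage /=; rewrite -inE.
  split; [exact: (proj1 (continuousP _) (@snd_cont X Y) _ oA)|
          exact: (proj1 (continuousP _) (@snd_cont X Y) _ oB)|].
  apply/eqP; rewrite -preimage_setI AB0; exact: preimage_set0.
have [[A B] /= [xA xB] [oA oB /eqP AB0]] := hX _ _ nx.
exists (fst @^-1` A, fst @^-1` B) => /=.
  by split; rewrite inE /preimage /=; rewrite -inE.
split; [exact: (proj1 (continuousP _) (@fst_cont X Y) _ oA)|
        exact: (proj1 (continuousP _) (@fst_cont X Y) _ oB)|].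
apply/eqP; rewrite -preimage_setI AB0; exact: preimage_set0.
Qed.

Lemma hausdorff_inj (X Y : topologicalType) (f : X -> Y) :
  continuous f -> injective f -> hausdorff_space Y -> hausdorff_space X.
Proof.
move=> cf inj; rewrite !open_hausdorff => hY x y nxy.
have nf : f x != f y by apply: contra nxy => /eqP /inj ->.
have [[A B] /= [xA yB] [oA oB /eqP AB0]] := hY _ _ nf.
exists (f @^-1` A, f @^-1` B) => /=.
  by split; rewrite inE /preimage /=; rewrite -inE.
split; [exact: (proj1 (continuousP _) cf _ oA)|
        exact: (proj1 (continuousP _) cf _ oB)|].
apply/eqP; rewrite -preimage_setI AB0; exact: preimage_set0.
Qed.

Lemma R3_hausdorff : hausdorff_space ((RR * RR) * RR)%type.
Proof. by apply: hausdorff_prod; [apply: hausdorff_prod|]; apply: Rhausdorff. Qed.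

Section SphereFacts.
Variable X : topologicalType.
Hypothesis hX : is_sphere X.

Lemma sphere_hausdorff : hausdorff_space X.
Proof.
case: hX => phi [cphi _ [psi [_ _ K _]]].
apply: (@hausdorff_inj _ _ phi).
- by apply/continuous_subspace_setT.
- by move=> x y e; rewrite -(K x I) -(K y I) e.
- exact: R3_hausdorff.
Qed.

Definition nrm3 (p : (RR * RR) * RR) : RR := p.1.1 ^+ 2 + p.1.2 ^+ 2 + p.2 ^+ 2.

Lemma nrm3_cont : continuous nrm3.
Proof.
move=> p; rewrite /nrm3.
have c11 : continuous (fun p : (RR * RR) * RR => p.1.1).
  by move=> q; apply: continuous_comp; [apply: fst_cont| apply: fst_cont].
have c12 : continuous (fun p : (RR * RR) * RR => p.1.2).
  by move=> q; apply: continuous_comp; [apply: fst_cont| apply: snd_cont].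
have c2 : continuous (fun p : (RR * RR) * RR => p.2) by apply: snd_cont.
by apply: contD; [apply: contD|]; apply: contSq.
Qed.

Lemma sphere2_compact : compact sphere2.
Proof.
pose I : set RR := [set` `[(-1 : RR), 1]].
apply: (@subclosed_compact _ _ ((I `*` I) `*` I)).
- have -> : sphere2 = nrm3 @^-1` [set 1] by [].
  apply: preimage_closed; first by move=> x _; apply: nrm3_cont.
  apply: accessible_closed_set1; apply: hausdorff_accessible; exact: Rhausdorff.
- by apply: compact_setX; [apply: compact_setX|]; apply: segment_compact.
- move=> [[a b] c]; rewrite /sphere2 /= => h.
  have ha : a ^+ 2 <= 1 by rewrite -h -addrA lerDl addr_ge0 ?sqr_ge0.
  have hb : b ^+ 2 <= 1 by rewrite -h addrAC lerDr addr_ge0 ?sqr_ge0.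
  have hc : c ^+ 2 <= 1 by rewrite -h lerDr addr_ge0 ?sqr_ge0.
  by split; [split|]; rewrite /I /= in_itv /=; apply: sqr_le1.
Qed.

Lemma sphere_compact : compact [set: X].
Proof.
case: hX => phi [cphi Sphi [psi [cpsi _ K _]]].
have -> : [set: X] = psi @` sphere2.
  apply/seteqP; split => x // _; exists (phi x); [exact: Sphi | exact: K].
exact: continuous_compact cpsi sphere2_compact.
Qed.

End SphereFacts.

Definition arcf (q : RR * RR) (t : RR) : (RR * RR) * RR := ((q.1 * sin t, q.2 * sin t), cos t).

Lemma arcf_cont q : continuous (arcf q).
Proof.
apply: pair_cont; last exact: continuous_cos.
apply: pair_cont; apply: contM => //; try exact: continuous_sin; move=> t; exact: cvg_cst.
Qed.

Lemma sphere2_connected : connected sphere2.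
Proof.
pose Q := [set q : RR * RR | q.1 ^+ 2 + q.2 ^+ 2 = 1].
pose seg : set RR := [set` `[0, pi]].
have -> : sphere2 = \bigcup_(q in Q) (arcf q @` seg).
  apply/seteqP; split.
  - move=> [[a b] c]; rewrite /sphere2 /= => h.
    have hc : -1 <= c <= 1 by apply: sqr_le1; rewrite -h lerDr addr_ge0 ?sqr_ge0.
    have hcI : c \in `[(-1 : RR), 1] by rewrite in_itv.
    pose t := acos c.
    have ct : cos t = c by rewrite /t acosK.
    have st0 : 0 <= sin t by apply: sin_ge0_pi; rewrite acos_ge0 // acos_lepi.
    have st2 : sin t ^+ 2 = a ^+ 2 + b ^+ 2 by rewrite sin2cos2 ct -h; ring.
    have tseg : seg t by rewrite /seg /= in_itv /= acos_ge0 // acos_lepi.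
    have [s0|s0] := eqVneq (sin t) 0.
    + have ab0 : a ^+ 2 + b ^+ 2 = 0 by rewrite -st2 s0 expr0n.
      have a0 : a = 0 by apply/eqP; rewrite -sqrf_eq0 eq_le sqr_ge0 andbT -ab0 lerDl sqr_ge0.
      have b0 : b = 0 by move: ab0; rewrite a0 expr0n add0r => /eqP; rewrite sqrf_eq0 => /eqP.
      exists (1, 0); first by rewrite /Q /= expr1n expr0n addr0.
      by exists t => //; rewrite /arcf /= s0 ct a0 b0 !mulr0.
    + exists (a / sin t, b / sin t).
        rewrite /Q /= !expr_div_n -mulrDl -st2 divff //; exact: expf_neq0.
      by exists t => //; rewrite /arcf /= ct !divfK.
  - move=> p [q Qq [t _ <-]]; rewrite /sphere2 /arcf /= !exprMn -mulrDl Qq mul1r.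
    by rewrite addrC cos2Dsin2.
apply: bigcup_connected.
  exists ((0, 0), 1) => q Qq; exists 0; first by rewrite /seg /= in_itv /= lexx pi_ge0.
  by rewrite /arcf sin0 cos0 !mulr0.
move=> q Qq; apply: connected_continuous_connected; first exact: segment_connected.
by apply: continuous_subspaceT; apply: arcf_cont.
Qed.

Section SphereFacts2.
Variable X : topologicalType.
Hypothesis hX : is_sphere X.

Lemma sphere_connected : connected [set: X].
Proof.
case: hX => phi [cphi Sphi [psi [cpsi _ K _]]].
have -> : [set: X] = psi @` sphere2.
  apply/seteqP; split => x // _; exists (phi x); [exact: Sphi | exact: K].
exact: connected_continuous_connected sphere2_connected cpsi.
Qed.

Lemma sphere_two : exists a b : X, a <> b.
Proof.
case: hX => phi [cphi Sphi [psi [cpsi _ K K']]].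
have hN : sphere2 ((0, 0), 1) by rewrite /sphere2 /= expr0n expr1n !add0r.
have hS : sphere2 ((0, 0), -1) by rewrite /sphere2 /= expr0n sqrrN expr1n !add0r.
exists (psi ((0, 0), 1)), (psi ((0, 0), -1)) => e.
have := K' _ hN; rewrite e K' // => -[]; lra.
Qed.

Lemma sphere_perfect (y : X) : ~ open [set y].
Proof.
move=> oy.
have cy : closed [set y].
  apply: accessible_closed_set1; apply: hausdorff_accessible; exact: sphere_hausdorff.
have e : [set y] = [set: X].
  apply: (@sphere_connected [set y]); first by exists y.
    by exists [set y] => //; rewrite setTI.
  by exists [set y] => //; rewrite setTI.
have [a [b ab]] := sphere_two.
apply: ab; have : [set y] a by rewrite e.
have : [set y] b by rewrite e.
by move=> /= -> ->.
Qed.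

End SphereFacts2.

Lemma nrm2_cont : continuous nrm2.
Proof. by apply: contD; apply: contSq; [apply: fst_cont | apply: snd_cont]. Qed.

Lemma nrm2_lt_open (r : RR) : open [set c : RR * RR | nrm2 c < r].
Proof.
have -> : [set c : RR * RR | nrm2 c < r] = nrm2 @^-1` [set y | y < r] by [].
apply: open_comp; [move=> y _; exact: nrm2_cont | exact: open_lt].
Qed.

Lemma disk_open : open disk.
Proof. exact: (@nrm2_lt_open 1). Qed.

Lemma nrm2_00 : nrm2 (0, 0) = 0.
Proof. by rewrite /nrm2 /= expr0n addr0. Qed.

Lemma nbhs0_nrm (A : set (RR * RR)) : nbhs ((0, 0) : RR * RR) A ->
  exists2 r : RR, 0 < r & forall z, nrm2 z < r -> A z.
Proof.
move=> /nbhs_ballP [e e0 sub]; exists (e ^+ 2); first by rewrite exprn_gt0.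
move=> [a b]; rewrite /nrm2 /= => h; apply: sub.
rewrite /ball /= /prod_ball /= /ball /= !sub0r !normrN.
have ha : a ^+ 2 < e ^+ 2 by apply: le_lt_trans h; rewrite lerDl sqr_ge0.
have hb : b ^+ 2 < e ^+ 2 by apply: le_lt_trans h; rewrite lerDr sqr_ge0.
by split; rewrite -(ltr_pXn2r (n:=2)) // ?nnegrE ?normr_ge0 ?ltW // real_normK ?num_real.
Qed.

Section Chart.
Variables (S T : topologicalType) (f : S -> T).

Lemma ld_chart (x : S) (d : nat) : local_deg f x d ->
  exists U : set S, [/\ open U, U x, (forall u, U u -> f u = f x -> u = x) &
   forall N : set S, open N -> N x ->
   exists W : set T, [/\ open W, W (f x) &
     forall w, W w -> w <> f x -> exists s : seq S,
       [/\ uniq s, size s = d, (forall u, (U u /\ f u = w) <-> u \in s) &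
           (forall u, u \in s -> N u)]]].
Proof.
move=> [d0 [U [V [phi [psi [[oU Ux oV fUV] [[cphi phiU [g [cg gD gphi phig]]]
   [cpsi psiV [h [ch hD hpsi psih]]]] phix psifx hf]]]]]].
have fUV' u : U u -> V (f u) by move=> Uu; apply: fUV; exists u.
exists U; split => //.
  move=> u Uu fu; have : cpow (phi u) d = (0, 0) by rewrite -hf // fu psifx.
  move=> /(cpow_eq0 d0) pu; by rewrite -(gphi _ Uu) pu -phix gphi.
move=> N oN Nx.
have disk0 : disk ((0, 0) : RR * RR) by rewrite /disk /= expr0n addr0 ltr01.
have cg0 : {for (0, 0), continuous g}.
  have := cg; rewrite continuous_open_subspace; last exact: disk_open.
  by move=> /(_ (0, 0)); apply; rewrite inE.
have g0 : g (0, 0) = x by rewrite -phix gphi.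
have : nbhs (g (0, 0)) N by rewrite g0; apply: open_nbhs_nbhs.
move=> /cg0 /nbhs0_nrm [r r0 Nr].
have cpsix : {for f x, continuous psi}.
  have := cpsi; rewrite continuous_open_subspace //.
  by move=> /(_ (f x)); apply; rewrite inE; apply: fUV'.
have : nbhs (psi (f x)) [set c : RR * RR | nrm2 c < r ^+ d].
  apply: open_nbhs_nbhs; split; first exact: nrm2_lt_open.
  by rewrite psifx /= nrm2_00 exprn_gt0.
move=> /cpsix; rewrite nbhsE => -[W0 [oW0 W0x] W0sub].
exists (W0 `&` V); split.
- exact: openI.
- by split => //; apply: fUV'.
move=> w [W0w Vw] nw.
set c := psi w.
have c0 : c <> (0, 0).
  by move=> e; apply: nw; rewrite -(hpsi _ Vw) -/c e -psifx hpsi //; apply: fUV'.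
have cdisk : nrm2 c < 1 by apply: psiV.
have cr : nrm2 c < r ^+ d by apply: W0sub.
have [s0 [us0 ss0 ms0]] := roots_count d0 c0.
have s0disk z : z \in s0 -> disk z.
  move=> /ms0 e; rewrite /disk -/(nrm2 z); apply: (@nrm2_pow_lt _ d 1 d0) => //.
  by rewrite expr1n e.
have s0r z : z \in s0 -> nrm2 z < r.
  move=> /ms0 e; apply: (@nrm2_pow_lt _ d r d0); first exact: ltW.
  by rewrite e.
exists (map g s0); split.
- rewrite map_inj_in_uniq // => a b ha hb e.
  by rewrite -(phig _ (s0disk _ ha)) e phig //; apply: s0disk.
- by rewrite size_map.
- move=> u; split.
    move=> [Uu fu]; rewrite -(gphi _ Uu); apply: map_f; apply/ms0.
    by rewrite -hf // fu.
  move=> /mapP [z zs ->]; have Dz := s0disk _ zs; have Ugz := gD _ Dz.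
  split => //.
  rewrite -(hpsi _ Vw) -(hpsi _ (fUV' _ Ugz)) hf // phig //; congr h.
  by apply/ms0.
- by move=> u /mapP [z zs ->]; apply: Nr; apply: s0r.
Qed.
End Chart.

Definition palias (S : topologicalType) (x : S) : Type := S.
HB.instance Definition _ (S : topologicalType) (x : S) := Topological.copy (@palias S x) S.
HB.instance Definition _ (S : topologicalType) (x : S) := isPointed.Build (@palias S x) x.
Lemma cover_of (S : topologicalType) (x : S) (A : set S) : compact A -> cover_compact A.
Proof. move=> cA. have := @compact_cover (@palias S x). move=> e.
have : @compact (@palias S x) A by exact cA.
rewrite e. exact. Qed.

Definition bigI (A : eqType) (X : Type) (s : seq A) (F : A -> set X) : set X :=
  foldr (fun y acc => F y `&` acc) setT s.
Lemma bigIP (A : eqType) (X : Type) (s : seq A) (F : A -> set X) u :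
  bigI s F u <-> forall y, y \in s -> F y u.
Proof.
elim: s => [|y s IH] /=; first by split.
split.
  move=> [Fy /IH h] y'; rewrite inE => /orP [/eqP ->|] //; exact: h.
move=> h; split; first by apply: h; rewrite inE eqxx.
by apply/IH => y' y's; apply: h; rewrite inE y's orbT.
Qed.
Lemma bigI_open (A : eqType) (X : topologicalType) (s : seq A) (F : A -> set X) :
  (forall y, y \in s -> open (F y)) -> open (bigI s F).
Proof.
elim: s => [|y s IH] /= h; first exact: openT.
apply: openI; first by apply: h; rewrite inE eqxx.
by apply: IH => y' ys; apply: h; rewrite inE ys orbT.
Qed.

Lemma fiber_card_uniq (S T : topologicalType) (f : S -> T) y a b :
  fiber_card f y a -> fiber_card f y b -> a = b.
Proof.
move=> [s [us ms <-]] [t [ut mt <-]]; apply: perm_size; apply: uniq_perm => // x.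
by apply/idP/idP => [/ms /mt|/mt /ms].
Qed.

Lemma flatten_uniq_disj (A X : eqType) (s : seq A) (tf : A -> seq X) :
  uniq s -> (forall x, x \in s -> uniq (tf x)) ->
  (forall x y u, x \in s -> y \in s -> x != y -> u \in tf x -> u \in tf y -> False) ->
  uniq (flatten (map tf s)).
Proof.
elim: s => [|x s IH] //= /andP [xs us] ut disj.
rewrite cat_uniq ut ?inE ?eqxx //= IH //; first last.
- by move=> a b u a_s b_s; apply: disj; rewrite inE ?a_s ?b_s orbT.
- by move=> a a_s; apply: ut; rewrite inE a_s orbT.
rewrite andbT; apply/hasPn => u /flattenP [t /mapP [y ys ->] uy]; apply/negP => ux.
apply: (disj x y u) => //; rewrite ?inE ?eqxx ?ys ?orbT //.
by apply: contra xs => /eqP ->.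
Qed.

Lemma size_flatten_map (A X : Type) (s : seq A) (tf : A -> seq X) :
  size (flatten (map tf s)) = (\sum_(x <- s) size (tf x))%N.
Proof. by elim: s => [|x s IH] /=; rewrite ?big_nil ?big_cons // size_cat IH. Qed.

Section Global.
Variables (S T : topologicalType) (f : S -> T).
Hypotheses (hS : hausdorff_space S) (cS : compact [set: S])
  (hT : hausdorff_space T) (cT : compact [set: T])
  (conT : connected [set: T]) (pT : forall y : T, ~ open [set y])
  (cf : continuous f) (lf : forall x, exists d, local_deg f x d).

Lemma ldegP x : local_deg f x (ldeg f x).
Proof. exact: (xgetPex 0%N (lf x)). Qed.

Lemma closed1T (y : T) : closed [set y].
Proof. by apply: accessible_closed_set1; apply: hausdorff_accessible. Qed.

Lemma fiber_fin z : exists s : seq S, uniq s /\ forall x, f x = z <-> x \in s.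
Proof.
case: (pselect (exists x, f x = z)) => [[x0 fx0]|nx]; last first.
  by exists [::]; split => // x; split => // fx; exfalso; apply: nx; exists x.
have [Uf hU] := choice (fun x => ld_chart (ldegP x)).
pose F := f @^-1` [set z].
have clF : closed F by apply: preimage_closed; [move=> ? _; exact: cf | exact: closed1T].
have cpF : compact F by apply: (subclosed_compact clF cS).
have [D' sD' cov] := cover_of x0 cpF (D := F) (f := Uf)
   (fun i _ => (let: And4 o _ _ _ := hU i in o))
   (fun x Fx => ex_intro2 _ _ x Fx (let: And4 _ ux _ _ := hU x in ux)).
exists D'; split; first exact: fset_uniq.
move=> x; split.
  move=> fx; have [i iD' Ui] := cov x fx.
  have Fi : F i by have := sD' i iD'; rewrite inE.
  have [_ _ fib _] := hU i.
  have -> : x = i by apply: fib => //; rewrite fx Fi.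
  by [].

by move=> xD'; have := sD' x xD'; rewrite inE.
Qed.

Lemma sep_exists (xy : S * S) : exists AB : set S * set S, xy.1 != xy.2 ->
  [/\ open AB.1, open AB.2, AB.1 xy.1, AB.2 xy.2 & AB.1 `&` AB.2 = set0].
Proof.
case: (eqVneq xy.1 xy.2) => [e|ne].
  by exists (setT, setT) => /eqP.
move: hS; rewrite open_hausdorff => h; have [AB [a b] [oa ob /eqP e0]] := h _ _ ne.
by exists AB => _; split => //; rewrite -inE.
Qed.

Lemma count_near z (s : seq S) : uniq s -> (forall x, f x = z <-> x \in s) ->
  exists W : set T, [/\ open W, W z &
    forall w, W w -> w <> z -> fiber_card f w (\sum_(x <- s) ldeg f x)%N].
Proof.
move=> us ms.
have [sp hsp] := choice sep_exists.
pose Nf (x : S) := bigI s (fun y => if y == x then setT else (sp (x, y)).1 `&` (sp (y, x)).2).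
have oN x : x \in s -> open (Nf x).
  move=> _; apply: bigI_open => y _; case: eqP => [_|/eqP ne]; first exact: openT.
  have ne' : x != y by rewrite eq_sym.
  have [Ho1 _ _ _ _] := hsp (x, y) ne'; have [_ Ho2 _ _ _] := hsp (y, x) ne; exact: openI.
have Nx x : x \in s -> Nf x x.
  move=> xs; apply/bigIP => y ys; case: eqP => [_|/eqP ne] //.
  have ne' : x != y by rewrite eq_sym.
  have [_ _ H1 _ _] := hsp (x, y) ne'; have [_ _ _ H2 _] := hsp (y, x) ne.
  by split.
have Ndisj x y u : x \in s -> y \in s -> x != y -> Nf x u -> Nf y u -> False.
  move=> xs ys ne /bigIP /(_ y ys) + /bigIP /(_ x xs).
  rewrite (negbTE (ne : ~~ (x == y))) eq_sym (negbTE ne) => -[a _] [_ b].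
  have [_ _ _ _ e] := hsp (x, y) ne.
  by have : (set0 : set S) u by rewrite -e; split.
have UWex x : exists UW : set S * set T, x \in s ->
   [/\ open UW.1, UW.1 x, open UW.2, UW.2 z &
    forall w, UW.2 w -> w <> z -> exists t : seq S,
      [/\ uniq t, size t = ldeg f x, (forall u, (UW.1 u /\ f u = w) <-> u \in t) &
          forall u, u \in t -> Nf x u]].
  case: (boolP (x \in s)) => xs; last by exists (setT, setT).
  have [U [oU Ux _ cnt]] := ld_chart (ldegP x).
  have [W [oW Wx cW]] := cnt (Nf x) (oN x xs) (Nx x xs).
  have fx : f x = z by apply/ms.
  by exists (U, W) => _; split => //=; rewrite -?fx.
have [UW hUW] := choice UWex.
pose O := \bigcup_(x in [set x | x \in s]) ((UW x).1 `&` Nf x).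
have oO : open O.
  apply: bigcup_open => x xs; have [Hop1 _ _ _ _] := hUW x xs.
  by move: Hop1 => Hop1; apply: openI => //; apply: oN.
have cK : compact (~` O).
  by apply: (subclosed_compact (open_closedC oO) cS).
have cfK : closed (f @` (~` O)).
  apply: compact_closed => //; apply: continuous_compact => //.
  exact: continuous_subspaceT.
pose W := ~` (f @` (~` O)) `&` bigI s (fun x => (UW x).2).
exists W; split.
- apply: openI; first exact: closed_openC.
  by apply: bigI_open => x xs; have [_ _ Hop2 _ _] := hUW x xs.
- split.
    move=> [u Ou fu]; apply: Ou; have us' : u \in s by apply/ms.
    exists u => //; have [_ Ux _ _ _] := hUW u us'; split => //; exact: Nx.
  by apply/bigIP => x xs; have [_ _ _ Wz _] := hUW x xs.
move=> w [nK /bigIP Ww] nwz.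
have tex x : exists t : seq S, x \in s ->
   [/\ uniq t, size t = ldeg f x, (forall u, ((UW x).1 u /\ f u = w) <-> u \in t) &
          forall u, u \in t -> Nf x u].
  case: (boolP (x \in s)) => xs; last by exists [::].
  have [_ _ _ _ cnt] := hUW x xs.
  have [t ht] := cnt w (Ww x xs) nwz; by exists t.
have [tf htf] := choice tex.
exists (flatten (map tf s)); split.
- apply: flatten_uniq_disj => //.
    by move=> x xs; have [] := htf x xs.
  move=> x y u xs ys ne ux uy; apply: (Ndisj x y u) => //.
    by have [_ _ _ H] := htf x xs; apply: H.
  by have [_ _ _ H] := htf y ys; apply: H.
- move=> u; split.
    move=> fu; have : ~ (~` O) u by move=> Ku; apply: nK; exists u.
    move=> /contrapT [x xs [Uu Nu]].
    apply/flattenP; exists (tf x); first by apply: map_f.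
    by have [_ _ H _] := htf x xs; apply/H.
  move=> /flattenP [t /mapP [x xs ->] ut].
  by have [_ _ H _] := htf x xs; have /H [] := ut.
- rewrite size_flatten_map; apply: eq_big_seq => x xs.
  by have [] := htf x xs.
Qed.
Lemma fiber_sum_bdeg z (s : seq S) : uniq s -> (forall x, f x = z <-> x \in s) ->
  (\sum_(x <- s) ldeg f x)%N = bdeg f.
Proof.
move=> us ms.
have Nex y : exists n : nat, exists t : seq S,
    [/\ uniq t, (forall x, f x = y <-> x \in t) & n = (\sum_(x <- t) ldeg f x)%N].
  have [t [ut mt]] := fiber_fin y; by exists (\sum_(x <- t) ldeg f x)%N, t.
have [Nv hNv] := choice Nex.
have sumE y (t : seq S) : uniq t -> (forall x, f x = y <-> x \in t) ->
    (\sum_(x <- t) ldeg f x)%N = Nv y.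
  move=> ut mt; have [t' [ut' mt' ->]] := hNv y.
  apply: perm_big; apply: uniq_perm => // x.
  by apply/idP/idP => [/mt /mt'|/mt' /mt].
have Wex y : exists W : set T, [/\ open W, W y &
    forall w, W w -> w <> y -> fiber_card f w (Nv y)].
  have [t' [ut' mt' e]] := hNv y.
  by have [W [oW Wy cW]] := count_near ut' mt'; exists W; split; rewrite // e.
have [Wf hW] := choice Wex.
have loc y w : Wf y w -> Nv w = Nv y.
  move=> Wyw; have [->|nwy] := eqVneq w y; first by [].
  have [oWy _ cWy] := hW y; have [oWw Www cWw] := hW w.
  pose O := Wf y `&` Wf w `&` ~` [set y].
  have oO : open O by apply: openI; [exact: openI | apply: closed_openC; exact: closed1T].
  have Ow : O w by split; [split|]; rewrite //=; apply/eqP.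
  have [u [Ou nuw]] : exists u, O u /\ u <> w.
    case: (pselect (exists u, O u /\ u <> w)) => // h; exfalso; apply: (@pT w); suff -> : [set w] = O by [].
    apply/seteqP; split => [u -> //|u Ou]; apply: contrapT => nuw.
    by apply: h; exists u.
  case: Ou => [[Wyu Wwu] nuy].
  by apply: (fiber_card_uniq (cWw u Wwu nuw) (cWy u Wyu nuy)).
have const y0 : Nv y0 = Nv z.
  pose A := [set y | Nv y = Nv z].
  have oA : open A.
    have -> : A = \bigcup_(y in A) Wf y.
      apply/seteqP; split => [u Au|u [y Ay Wyu]].
        by exists u => //; have [] := hW u.
      by rewrite /A /= (loc _ _ Wyu).
    by apply: bigcup_open => y _; have [] := hW y.
  have oAc : open (~` A).
    have -> : ~` A = \bigcup_(y in ~` A) Wf y.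
      apply/seteqP; split => [u Au|u [y Ay Wyu]].
        by exists u => //; have [] := hW u.
      by rewrite /A /= (loc _ _ Wyu).
    by apply: bigcup_open => y _; have [] := hW y.
  have : A = [set: T].
    apply: conT; first by exists z.
      by exists A => //; rewrite setTI.
    by exists A; [rewrite -[A]setCK; exact: open_closedC | rewrite setTI].
  by move=> e; have : A y0 by rewrite e.
rewrite (sumE z s us ms).
have [D' _ cov] := cover_of z cT (D := setT) (f := Wf)
   (fun i _ => (let: And3 o _ _ := hW i in o))
   (fun x _ => ex_intro2 _ _ x I (let: And3 _ ux _ := hW x in ux)).
pose B := [set` D'].
have fB : finite_set B by apply: finite_fset.
have PN : exists B : set T, finite_set B /\ forall y, ~ B y -> fiber_card f y (Nv z).
  exists B; split => // y nBy.
  have [x xD' Wxy] := cov y I.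
  have [_ _ cW] := hW x; rewrite -(const x); apply: cW => // e; apply: nBy.
  by rewrite e.
have [B0 [fB0 cB0]] : exists B : set T, finite_set B /\ forall y, ~ B y -> fiber_card f y (bdeg f).
  have := @xgetPex _ 0%N [set d | exists B : set T, finite_set B /\ forall y, ~ B y -> fiber_card f y d] (ex_intro _ (Nv z) PN). by [].
have [B1 [fB1 cB1]] := PN.
have [y ny] : exists y, ~ (B0 `|` B1) y.
  apply: contrapT => h; apply: (@pT z).
  have fU : finite_set (B0 `|` B1) by rewrite finite_setU.
  have cl : closed ((B0 `|` B1) `\` [set z]).
    have := proj1 (@accessible_finite_set_closed T) (hausdorff_accessible hT).
    apply; apply: sub_finite_set fU; by move=> u [].
  suff -> : [set z] = ~` ((B0 `|` B1) `\` [set z]) by exact: closed_openC.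
  apply/seteqP; split => [u -> [_ /= nz] //|u hu]; apply: contrapT => nuz.
  apply: hu; split => //; apply: contrapT => nb; apply: h; by exists u.
apply: (fiber_card_uniq (cB1 y _) (cB0 y _)) => h; apply: ny; by [right|left].
Qed.
End Global.

Lemma sphere_fiber_sum (S T : topologicalType) (f : S -> T) :
  is_sphere S -> is_sphere T -> branched_cover f ->
  forall z (s : seq S), uniq s -> (forall x, f x = z <-> x \in s) ->
  (\sum_(x <- s) ldeg f x)%N = bdeg f.
Proof.
move=> hS hT [cf lf] z s us ms.
apply: (@fiber_sum_bdeg S T f (sphere_hausdorff hS) (sphere_compact hS)
  (sphere_hausdorff hT) (sphere_compact hT) (sphere_connected hT)
  (@sphere_perfect T hT) cf lf z s us ms).
Qed.

Section Comb.
Variables (TY TZ : tree_of_spheres) (C : tcover TY TZ).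

Lemma edge2 (T : tree_of_spheres) (a : {set tV T}) : a \in tE T -> #|a| = 2.
Proof. by case: (tree_ax T) => h _ _; apply: h. Qed.

Lemma edge_deg_at (e' : {set tV TY}) (v' : tV TY) : e' \in tE TY -> v' \in e' ->
  v' \notin tX TY -> edge_deg C e' = ldeg (@cf _ _ C v') (@ti _ v' e').
Proof.
move=> eE ve vX; rewrite /edge_deg; case: pickP => [u /andP [ue uX]|/(_ v')]; last first.
  by rewrite ve vX.
have [->|nuv] := eqVneq u v'; first by [].
have ee : e' = [set u; v']%SET.
  apply/eqP; rewrite eq_sym eqEcard; apply/andP; split.
  - by apply/fintype.subsetP => w; rewrite !inE => /orP [] /eqP ->.
  - by rewrite edge2 // cards2 nuv.
have := @deg_ax _ _ C u v' uX vX; rewrite -ee; move=> /(_ eE) ->.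
by [].
Qed.

Lemma one_end (v : tV TZ) (e' : {set tV TY}) : e' \in tE TY -> v \in cF C @: e' ->
  exists v', forall w, ((cF C w == v) && (w \in e')) = (w == v').
Proof.
move=> eE /imsetP [v' v'e ->]; exists v' => w.
apply/idP/idP => [/andP [/eqP Fw we]|/eqP ->]; last by rewrite eqxx v'e.
have inj : {in e' &, injective (cF C)}.
  apply/imset_injP; rewrite edge2 ?edge2 //; exact: edge_ax.
by rewrite (inj _ _ we v'e Fw).
Qed.
End Comb.

Unset Implicit Arguments.
Local Close Scope classical_set_scope.
Local Close Scope ring_scope.

Theorem lemma2p19 (TY TZ : tree_of_spheres) (C : tcover TY TZ)
  (v : tV TZ) (e : {set tV TZ}) :
  e \in Ev (tE TZ) v -> De C e = Dv C v.
Proof.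
move=> hev; move: (hev); rewrite inE => /andP [eE ve].
rewrite /De /Dv.
transitivity (\sum_(e' | (e' \in tE TY) && (cF C @: e' == e))
   \sum_(v' | (cF C v' == v) && (v' \in e')) edge_deg C e').
  apply: eq_bigr => e' /andP [e'E /eqP ee].
  have vin : v \in cF C @: e' by rewrite ee.
  have [v' hv'] := @one_end _ _ C v e' e'E vin.
  by rewrite (big_pred1 v').
rewrite (exchange_big_dep (fun v' => cF C v' == v)); last by move=> e' v' _ /andP [].
apply: eq_bigr => v' /eqP Fv'.
case: (boolP (v \in tX TZ)) => vX.
- have v'X : v' \in tX TY.
    apply: contraLR vX => h; rewrite -Fv'; exact: int_ax.
  have lv' : v' \in leaves (tE TY) by rewrite mark_ax.
  have lv : v \in leaves (tE TZ) by rewrite mark_ax.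
  move: lv'; rewrite inE => /cards1P [a0 ha0].
  move: lv; rewrite inE => /cards1P [e0 he0].
  have a0E : a0 \in Ev (tE TY) v' by rewrite ha0 inE.
  move: (a0E); rewrite inE => /andP [a0tE v'a0].
  have Fa0 : cF C @: a0 = e.
    have h1 : cF C @: a0 \in Ev (tE TZ) v.
      by rewrite inE edge_ax //= -Fv' imset_f.
    by move: h1 hev; rewrite he0 !inE => /eqP -> /eqP ->.
  rewrite /vertex_deg v'X /=.
  case: pickP => [a aE|none]; last by move: (none a0); rewrite a0E.
  have -> : a = a0 by move: aE; rewrite ha0 inE => /eqP.
  apply: big_pred1 => e'; rewrite /= Fv' eqxx /=.
  apply/idP/idP => [/andP [/andP [e'E _] ve']|/eqP ->].
    have : e' \in Ev (tE TY) v' by rewrite inE e'E ve'.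
    by rewrite ha0 inE.
  by rewrite a0tE Fa0 eqxx v'a0.
- have v'X : v' \notin tX TY.
    apply: contra vX => h; rewrite -Fv'; exact: leaf_ax.
  rewrite /vertex_deg v'X.
  pose P := [set a in Ev (tE TY) v' | cF C @: a == e].
  have FvX : cF C v' \notin tX TZ by apply: int_ax.
  have eFv : e \in Ev (tE TZ) (cF C v') by rewrite Fv'.
  have hmem : forall x, @cf _ _ C v' x = @ti _ (cF C v') e <-> x \in map (@ti _ v') (enum P).
    move=> x; split.
      move=> hx; case: (pselect (@Xv TY v' x)) => [[a aE eax]|nX]; last first.
        have [cov _] := @cov_ax _ _ C v' v'X.
        by have := cov x nX; rewrite /= hx; case; exists e.
      move: hx; rewrite -eax => hx; apply: map_f; rewrite mem_enum inE aE /=.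
      move: hx; rewrite compat_ax // => /(inj_ax FvX) -> //.
      rewrite inE edge_ax /= ?imset_f //.
      1-2: by move: aE; rewrite inE => /andP [H1 H2].
    move=> /mapP [a]; rewrite mem_enum inE => /andP [aE /eqP Fa] ->.
    by rewrite compat_ax // Fa.
  have huniq : uniq (map (@ti _ v') (enum P)).
    rewrite map_inj_in_uniq ?enum_uniq // => a b.
    rewrite !mem_enum !inE => /andP [aE _] /andP [bE _].
    by apply: (inj_ax v'X); rewrite ?inE.
  rewrite -(@sphere_fiber_sum _ _ (@cf _ _ C v') (sphere_ax v'X) (sphere_ax FvX)
     (@bc_ax _ _ C v' v'X) (@ti _ (cF C v') e) (map (@ti _ v') (enum P)) huniq hmem).
  rewrite big_map big_enum /=.
  apply: eq_big => e'.
    rewrite Fv' eqxx /= !inE; case: (e' \in tE TY); case: (v' \in e'); by rewrite ?andbT ?andbF.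
  move=> /and3P [/andP [e'E _] _ ve'].
  by rewrite (@edge_deg_at _ _ C e' v' e'E ve' v'X).
Qed.
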